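(* Let $m\ge3$ and $h\ge1$ be integers and set $n'=2^{2m+h-3}-2^{2m-3}-2^{m-1}$. Let $\mathbf{C}_0$ be a projective binary linear $[2^{2m-3}+2^{m-2}-1,\ 2m-2]$ code whose set of nonzero weights is $\{2^{2m-4},\,2^{2m-4}+2^{m-2}\}$, and let $\mathbf{C}_1$ be its simplex complementary code of dimension $2m+h-2$, a $[2^{2m+h-2}-2^{2m-3}-2^{m-2},\ 2m+h-2,\ 2^{2m+h-3}-2^{2m-4}-2^{m-2}]_2$ code with maximum weight $2^{2m+h-3}$. Then the code $\mathbf{C}'$ obtained from $\mathbf{C}_1$ by the extension construction is a minimal binary linear $[2^{2m+h-2}-2^{2m-3}-2^{m-2}+n',\ 2m+h-2,\ 2^{2m+h-3}-2^{2m-4}-2^{m-2}]_2$ code with maximum weight $2^{2m+h-2}-2^{2m-3}-2^{m-1}$, and it violates the Ashikhmin–Barg condition.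
   Context: Projective code: columns of a generator matrix are nonzero and pairwise distinct (binary case). Simplex complementary code of dimension $K=k+h$ of a projective binary $[n,k]$ code: append $h$ zeros to the columns of a generator matrix and take the code generated by the matrix whose columns are all nonzero vectors of $\mathbf{F}_2^K$ other than these $n$. Extension construction for a binary $[N,K]$ code $\mathbf{D}$, $K\ge2$, with minimum nonzero weight $w_{min}$, maximum weight $w_{max}$ and $n'=2w_{min}-w_{max}\ge1$: choose a basis $\mathbf{r}_1,\dots,\mathbf{r}_K$ with $wt(\mathbf{r}_1)=w_{max}$, $wt(\mathbf{r}_2)=w_{min}$; the extended code is generated by $(\mathbf{1},\mathbf{r}_1),(\mathbf{0},\mathbf{r}_2),\dots,(\mathbf{0},\mathbf{r}_K)$ in $\mathbf{F}_2^{n'+N}$. Minimal code: nonzero codewords with nested supports are equal. Ashikhmin–Barg condition (binary): $w_{min}/w_{max}>1/2$. *)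

(* Defs.v *)
From HB Require Import structures.
From mathcomp Require Import all_boot all_order all_algebra.
Set Implicit Arguments. Unset Strict Implicit. Unset Printing Implicit Defensive.
Import Order.TTheory GRing.Theory Num.Theory.
Local Open Scope ring_scope.

Definition code (k n : nat) (G : 'M['F_2]_(k, n)) : {set 'rV['F_2]_n} :=
  [set u *m G | u : 'rV['F_2]_k].

Definition supp (n : nat) (v : 'rV['F_2]_n) : {set 'I_n} := [set j | v 0 j != 0].
Definition wt (n : nat) (v : 'rV['F_2]_n) : nat := #|supp v|.

Definition wmax (k n : nat) (G : 'M['F_2]_(k, n)) : nat :=
  \max_(c in code G) wt c.
Definition wmin (k n : nat) (G : 'M['F_2]_(k, n)) : nat :=
  \big[minn/n]_(c in code G :\ 0) wt c.

Definition has_nz_weight (k n : nat) (G : 'M['F_2]_(k, n)) (w : nat) : Prop :=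
  exists2 c, c \in code G :\ 0 & wt c = w.

Definition projective (k n : nat) (G : 'M['F_2]_(k, n)) : Prop :=
  (forall j, col j G != 0) /\ injective (fun j => col j G).

Definition minimal_code (k n : nat) (G : 'M['F_2]_(k, n)) : Prop :=
  forall c c', c \in code G :\ 0 -> c' \in code G :\ 0 ->
    supp c \subset supp c' -> c = c'.

Definition AB_condition (k n : nat) (G : 'M['F_2]_(k, n)) : Prop :=
  (1 / 2 : rat) < (wmin G)%:R / (wmax G)%:R.

(* Simplex complementary code of dimension k+h: columns are all nonzero
   vectors of F_2^(k+h) except the columns of G padded with h zeros
   (columns listed in the canonical enumeration order). *)
Definition simplex_cols (k n h : nat) (G : 'M['F_2]_(k, n)) : {set 'cV['F_2]_(k + h)} :=
  [set v | (v != 0) && (v \notin [set col_mx (col j G) (0 : 'cV['F_2]_h) | j : 'I_n])].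

Definition simplex_comp (k n h : nat) (G : 'M['F_2]_(k, n))
  : 'M['F_2]_(k + h, #|simplex_cols h G|%N) :=
  \matrix_(i, j) (enum_val (A := mem (simplex_cols h G)) j : 'cV['F_2]_(k + h)) i 0.

(* Extension construction: R's rows r_1..r_K; the extended generator matrix
   has rows (1, r_1), (0, r_2), ..., (0, r_K) in F_2^(n' + N). *)
Definition ext_mx (n' K N : nat) (R : 'M['F_2]_(K, N)) : 'M['F_2]_(K, n' + N) :=
  row_mx (\matrix_(i, j) (if (i : nat) == 0 then 1 else 0)) R.

(* R's rows form a basis r_1, ..., r_K of the code generated by G with
   wt(r_1) = wmax and wt(r_2) = wmin (indices 0 and 1 here). *)
Definition ext_basis (K N : nat) (G R : 'M['F_2]_(K, N)) : Prop :=
  [/\ (R == G)%MS, row_free R,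
      (forall i : 'I_K, (i : nat) = 0 -> wt (row i R) = wmax G) &
      (forall i : 'I_K, (i : nat) = 1 -> wt (row i R) = wmin G)].

Definition ext_len (K N : nat) (G : 'M['F_2]_(K, N)) : nat := 2 * wmin G - wmax G.

(* Main.v *)
Require Import Defs.
From HB Require Import structures.
From mathcomp Require Import all_boot all_order all_algebra.
From mathcomp Require Import zify ring.
Set Implicit Arguments. Unset Strict Implicit. Unset Printing Implicit Defensive.
Import Order.TTheory GRing.Theory Num.Theory.
Local Open Scope ring_scope.

Lemma F2_cases (x : 'F_2) : x = 0 \/ x = 1.
Proof. by case: x => [[|[|]]] // Hx; [left|right]; apply/val_inj. Qed.

Lemma card_F2 : #|'F_2| = 2%N.
Proof. by rewrite card_Fp. Qed.

Lemma wtE n (v : 'rV['F_2]_n) : wt v = (\sum_j (v 0 j != 0)%R)%N.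
Proof.
rewrite /wt /supp -sum1_card big_mkcond /=; apply: eq_bigr => j _.
by rewrite inE; case: (v 0 j != 0).
Qed.

Lemma wt0 n : wt (0 : 'rV['F_2]_n) = 0%N.
Proof. by rewrite wtE big1 // => j _; rewrite mxE eqxx. Qed.

Lemma wt_le n (v : 'rV['F_2]_n) : (wt v <= n)%N.
Proof. by rewrite /wt; apply: leq_trans (max_card _) _; rewrite card_ord. Qed.

Lemma wt_row_mx n1 n2 (x : 'rV['F_2]_n1) (y : 'rV['F_2]_n2) :
  wt (row_mx x y) = (wt x + wt y)%N.
Proof.
rewrite !wtE big_split_ord /=.
congr (_ + _)%N.
 by apply: eq_bigr => j _; rewrite row_mxEl.
by apply: eq_bigr => j _; rewrite row_mxEr.
Qed.

Lemma wt_const n (x : 'F_2) : wt (const_mx x : 'rV['F_2]_n) = ((x != 0)%R * n)%N.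
Proof.
rewrite wtE (eq_bigr (fun _ => (x != 0)%R : nat)); last by move=> j _; rewrite mxE.
by rewrite sum_nat_const card_ord mulnC.
Qed.

Lemma nz_entry n (u : 'rV['F_2]_n) : u != 0 -> exists i, u 0 i != 0.
Proof.
move=> u0; apply/existsP; apply: contraR u0 => /existsPn H.
apply/eqP/matrixP => i j; rewrite ord1 mxE; exact/eqP/negPn/H.
Qed.

Lemma code_mem k n (G : 'M['F_2]_(k, n)) c : (c \in code G) <-> exists u, c = u *m G.
Proof. by split; [case/imsetP => u _ ->; exists u | case=> u ->; apply: imset_f]. Qed.

Lemma wmax_ge k n (G : 'M['F_2]_(k, n)) c : c \in code G -> (wt c <= wmax G)%N.
Proof. by move=> Hc; rewrite /wmax (leq_bigmax_cond _ Hc). Qed.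

Lemma wmax_eq k n (G : 'M['F_2]_(k, n)) w :
  (forall c, c \in code G -> (wt c <= w)%N) -> (exists2 c, c \in code G & wt c = w) ->
  wmax G = w.
Proof.
move=> H [c Hc Hw]; apply/eqP; rewrite eqn_leq -{2}Hw wmax_ge // andbT.
by apply/bigmax_leqP => d Hd; apply: H.
Qed.

Lemma bigmin_le (T : finType) (P : pred T) (F : T -> nat) x c :
  P c -> (\big[minn/x]_(i | P i) F i <= F c)%N.
Proof.
move=> Pc; rewrite unlock /=.
have: c \in index_enum T by rewrite mem_index_enum.
elim: (index_enum T) => //= a s IH; rewrite inE => /orP [/eqP<-|/IH H].
  by rewrite Pc geq_minl.
by case: (P a) => //; exact: leq_trans (geq_minr _ _) H.
Qed.

Lemma wmin_le k n (G : 'M['F_2]_(k, n)) c : c \in code G :\ 0 -> (wmin G <= wt c)%N.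
Proof. by move=> Hc; rewrite /wmin bigmin_le. Qed.

Lemma wmin_eq k n (G : 'M['F_2]_(k, n)) w :
  (forall c, c \in code G :\ 0 -> (w <= wt c)%N) -> (exists2 c, c \in code G :\ 0 & wt c = w) ->
  wmin G = w.
Proof.
move=> H [c Hc Hw]; apply/eqP; rewrite eqn_leq -{1}Hw wmin_le //=.
apply: (big_ind (fun x => w <= x)%N); first by rewrite -Hw wt_le.
  by move=> x y Hx Hy; rewrite leq_min Hx Hy.
by move=> d Hd; apply: H.
Qed.

Lemma F2_11 : (1 + 1 : 'F_2) = 0.
Proof. by apply/val_inj. Qed.

Lemma F2_xx (x : 'F_2) : x + x = 0.
Proof. by case: (F2_cases x) => ->; rewrite ?addr0 ?F2_11. Qed.

Lemma addxx a b (A : 'M['F_2]_(a, b)) : A + A = 0.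
Proof. by apply/matrixP => i j; rewrite !mxE F2_xx. Qed.

Lemma balanced K (u : 'rV['F_2]_K) : u != 0 ->
  (#|[set v : 'cV['F_2]_K | ((u *m v) 0 0 != 0)%R]| * 2 = 2 ^ K)%N.
Proof.
move=> u0; have [i ui] := nz_entry u0.
have ui1 : u 0 i = 1 by case: (F2_cases (u 0 i)) ui => -> //; rewrite eqxx.
set T := [set v | _].
pose v0 : 'cV['F_2]_K := delta_mx i 0.
have f1 v : ((u *m (v + v0)) 0 0 = (u *m v) 0 0 + 1)%R.
  by rewrite mulmxDr mxE -colE [col _ _ _ _]mxE ui1.
have TC : ~: T = (fun v => v + v0) @: T.
  apply/setP => v; rewrite !inE; apply/idP/imsetP.
    move=> Hv; exists (v + v0); last by rewrite -addrA addxx addr0.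
    by rewrite inE f1 (eqP (negPn Hv)) add0r oner_eq0.
  case=> w; rewrite inE => Hw ->; rewrite f1.
  by case: (F2_cases ((u *m w) 0 0)) Hw => ->; rewrite ?eqxx // F2_11 eqxx.
have := cardsC T; rewrite TC card_imset; last exact: addIr.
move=> H.
rewrite card_mx card_F2 in H.
by rewrite muln1 in H; rewrite -H muln2 -addnn.
Qed.

Section Simplex.
Variables (k n h : nat) (G : 'M['F_2]_(k, n)).
Hypothesis pG : projective G.

Let pad (j : 'I_n) : 'cV['F_2]_(k + h) := col_mx (col j G) (0 : 'cV['F_2]_h).

Lemma pad_inj : injective pad.
Proof. by move=> i j /eq_col_mx [/(proj2 pG)]. Qed.

Lemma pad_nz j : pad j != 0.
Proof.
apply: contra (proj1 pG j) => /eqP H; rewrite -col_mx0 in H.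
by case: (eq_col_mx H) => ->.
Qed.

Lemma simplex_card : #|simplex_cols h G| = (2 ^ (k + h) - 1 - n)%N.
Proof.
have -> : simplex_cols h G = [set~ 0] :\: [set pad j | j : 'I_n].
  by apply/setP => v; rewrite !inE andbC.
rewrite cardsD (setIidPr _).
  by rewrite cardsC1 card_mx card_F2 card_imset ?card_ord ?muln1 ?subn1 //; exact: pad_inj.
apply/subsetP => v /imsetP [j _ ->]; rewrite !inE; exact: pad_nz.
Qed.

Lemma pad_eval (u : 'rV['F_2]_(k + h)) j :
  (u *m pad j) 0 0 = (lsubmx u *m G) 0 j.
Proof.
rewrite /pad -{1}[u]hsubmxK mul_row_col mulmx0 addr0 !mxE.
by apply: eq_bigr => i _; rewrite !mxE.
Qed.

Lemma half_pow K c : (c * 2 = 2 ^ K -> c = 2 ^ K.-1)%N.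
Proof. case: K => [|K] /=; rewrite ?expn0 ?expnS; lia. Qed.

Lemma simplex_wt (u : 'rV['F_2]_(k + h)) : u != 0 ->
  wt (u *m simplex_comp h G) = (2 ^ (k + h).-1 - wt (lsubmx u *m G))%N.
Proof.
move=> u0.
set S := simplex_cols h G.
set T := [set v : 'cV['F_2]_(k + h) | ((u *m v) 0 0 != 0)%R].
set P := [set pad j | j : 'I_n].
have step1 : wt (u *m simplex_comp h G) = #|[set x in S | x \in T]|.
  rewrite wtE.
  transitivity (\sum_(i < #|S|) ((u *m enum_val i) 0 0 != 0)%R : nat)%N.
    apply: eq_bigr => j _; congr (nat_of_bool (_ != _)).
    by rewrite !mxE; apply: eq_bigr => i _; rewrite !mxE.
  rewrite -(big_enum_val (fun x => nat_of_bool ((u *m x) 0 0 != 0)%R)).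
  rewrite -sum1_card big_mkcond /= [RHS]big_mkcond /=.
  by apply: eq_bigr => x _; rewrite [x \in [set _ in S | _]]inE [x \in T]inE; case: (x \in S) => //=; case: (_ != 0)%R.
have step2 : [set x in S | x \in T] = T :\: P.
  apply/setP => x; rewrite !inE; case Hx: ((u *m x) 0 0 != 0)%R; rewrite ?andbF //=.
  have -> : (x != 0) = true.
    by apply: contraTneq Hx => ->; rewrite mulmx0 mxE eqxx.
  by [].
have step3 : T :&: P = pad @: [set j | ((lsubmx u *m G) 0 j != 0)%R].
  apply/setP => v; rewrite inE; apply/andP/imsetP.
    by case=> Tv /imsetP [j _ Ev]; exists j => //; rewrite inE -pad_eval -Ev; move: Tv; rewrite inE.
  case=> j; rewrite inE => Hj ->; split; last exact: imset_f.
  by rewrite inE pad_eval.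
rewrite step1 step2 cardsD step3 card_imset; last exact: pad_inj.
by rewrite (half_pow (balanced u0)).
Qed.

End Simplex.

Lemma supp_sub_wt n (a b : 'rV['F_2]_n) :
  supp a \subset supp b -> wt b = (wt a + wt (b - a))%N.
Proof.
move=> Hs; rewrite !wtE -big_split /=; apply: eq_bigr => j _.
have := subsetP Hs j; rewrite !inE !mxE.
case: (F2_cases (a 0 j)) => ->; case: (F2_cases (b 0 j)) => ->;
  rewrite ?eqxx ?oner_eq0 ?subr0 ?subrr ?eqxx //=.
by move/(_ isT).
Qed.

Lemma bit_le (x y : 'F_2) : ((y != 0)%R <= (x != 0)%R + (y - x != 0)%R)%N.
Proof.
case: (F2_cases x) => ->; rewrite ?subr0 ?eqxx ?oner_eq0 //=.
exact: leq_trans (leq_b1 _) (leq_addr _ _).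
Qed.

Lemma code_f k n (G : 'M['F_2]_(k, n)) u : u *m G \in code G.
Proof. by apply/code_mem; exists u. Qed.

Section Ext.
Variables (K N : nat) (G R : 'M['F_2]_(K, N)).
Hypotheses (hK : (1 < K)%N) (hb : ext_basis G R) (hn : (wmax G < 2 * wmin G)%N).

Let i0 : 'I_K := Ordinal (ltnW hK).
Let i1 : 'I_K := Ordinal hK.
Let n' := ext_len G.
Let E := ext_mx n' R.

Lemma uL (u : 'rV['F_2]_K) :
  u *m (\matrix_(i, j) (if (i : nat) == 0%N then 1 else 0) : 'M['F_2]_(K, n')) = const_mx (u 0 i0).
Proof.
apply/matrixP => a j; rewrite !mxE (bigD1 i0) //= mxE eqxx mulr1 big1 ?addr0 ?(ord1 a) //.
move=> i ne; rewrite mxE; have -> : ((i : nat) == 0%N) = false.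
  by apply/negbTE; apply: contra ne => /eqP H; apply/eqP/val_inj.
by rewrite mulr0.
Qed.

Lemma wt_E (u : 'rV['F_2]_K) : wt (u *m E) = ((u 0 i0 != 0)%R * n' + wt (u *m R))%N.
Proof. by rewrite /E /ext_mx mul_mx_row wt_row_mx uL wt_const. Qed.

Lemma RleG : (R <= G)%MS.
Proof. by case: hb => /andP []. Qed.

Lemma Rfree : row_free R.
Proof. by case: hb. Qed.

Lemma codeR (u : 'rV['F_2]_K) : u *m R \in code G.
Proof.
have /submxP [D ->] : (u *m R <= G)%MS := submx_trans (submxMl u R) RleG.
exact: code_f.
Qed.

Lemma uR_nz (u : 'rV['F_2]_K) : u != 0 -> u *m R != 0.
Proof. by rewrite mulmx_free_eq0 // Rfree. Qed.

Lemma uR_lo (u : 'rV['F_2]_K) : u != 0 -> (wmin G <= wt (u *m R))%N.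
Proof. by move=> u0; apply: wmin_le; rewrite !inE uR_nz // codeR. Qed.

Lemma uR_hi (u : 'rV['F_2]_K) : (wt (u *m R) <= wmax G)%N.
Proof. exact/wmax_ge/codeR. Qed.

Lemma E_inj (u : 'rV['F_2]_K) : u *m E = 0 -> u = 0.
Proof.
rewrite /E /ext_mx mul_mx_row => /eqP; rewrite row_mx_eq0 => /andP [_].
by rewrite mulmx_free_eq0 ?Rfree // => /eqP.
Qed.

Lemma E_rank : \rank E = K.
Proof. by apply/eqP; apply: inj_row_free; exact: E_inj. Qed.

Lemma code_uE c : c \in code E -> exists u, c = u *m E.
Proof. by case/imsetP => u _ ->; exists u. Qed.

Lemma E_wmin : wmin E = wmin G.
Proof.
apply: wmin_eq.
  move=> c; rewrite !inE => /andP [c0 /code_uE [u Eu]]; subst c.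
  have u0 : u != 0 by apply: contra c0 => /eqP ->; rewrite mul0mx.
  by rewrite wt_E; apply: leq_trans (uR_lo u0) (leq_addl _ _).
exists (delta_mx 0 i1 *m E).
  rewrite !inE code_f andbT; apply/eqP => /E_inj /matrixP /(_ 0 i1).
  by rewrite !mxE !eqxx /= => /eqP; rewrite oner_eq0.
have [_ _ _ H1] := hb; rewrite wt_E -rowE H1 // mxE eqxx /=.
by rewrite mul0n.
Qed.

Lemma E_wmax : wmax E = (2 * wmin G)%N.
Proof.
apply: wmax_eq.
  move=> c /code_uE [u ->]; rewrite wt_E.
  have := uR_hi u; rewrite /n' /ext_len.
  case: (_ != 0)%R; rewrite ?mul1n ?mul0n; lia.
exists (delta_mx 0 i0 *m E); first exact: code_f.
have [_ _ H0 _] := hb; rewrite wt_E -rowE H0 // mxE !eqxx /= /n' /ext_len. lia.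
Qed.

Lemma E_minimal : minimal_code E.
Proof.
move=> c c'; rewrite !inE => /andP [c0 /code_uE [u Eu]] /andP [c'0 /code_uE [v Ev]] Hs.
case: (eqVneq c c') => // ne; exfalso.
have Hw := supp_sub_wt Hs.
have Hd : c' - c = (v - u) *m E by rewrite Eu Ev mulmxBl.
have vu0 : v - u != 0.
  by apply: contra ne => /eqP H; rewrite Eu Ev; move/eqP: H; rewrite subr_eq0 => /eqP ->.
have u0 : u != 0 by apply: contra c0 => /eqP u0; rewrite Eu u0 mul0mx.
rewrite Hd Ev !wt_E Eu wt_E in Hw.
have h1 := uR_lo u0; have h2 := uR_lo vu0; have h3 := uR_hi v.
have hb1 := bit_le (u 0 i0) (v 0 i0).
have hb2 : ((v 0 i0 != 0)%R * n' <= (u 0 i0 != 0)%R * n' + ((v - u) 0 i0 != 0)%R * n')%N.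
  by rewrite -mulnDl leq_mul2r [(v - u) 0 i0]mxE [(- u) 0 i0]mxE hb1 orbT.
move: Hw hb2 h1 h2 h3 hn.
move: (wt (u *m R)) (wt (v *m R)) (wt ((v - u) *m R)) ((v 0 i0 != 0)%R * n')%N
  ((u 0 i0 != 0)%R * n')%N (((v - u) 0 i0 != 0)%R * n')%N (wmin G) (wmax G).
clear; move=> *; lia.
Qed.

End Ext.


Local Close Scope ring_scope.

Lemma arith m h : 3 <= m -> 1 <= h ->
  [/\ 2 ^ (2 * m - 3) = 2 * 2 ^ (2 * m - 4),
      2 ^ (m - 1) = 2 * 2 ^ (m - 2),
      2 ^ (2 * m + h - 2) = 2 * 2 ^ (2 * m + h - 3),
      2 ^ (2 * m - 2 + h) = 2 * 2 ^ (2 * m + h - 3) &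
   [/\ 2 ^ (2 * m - 2 + h).-1 = 2 ^ (2 * m + h - 3),
      2 <= 2 ^ (m - 2),
      2 * 2 ^ (m - 2) <= 2 ^ (2 * m - 4) &
      4 * 2 ^ (2 * m - 4) <= 2 ^ (2 * m + h - 3)]].
Proof.
move=> hm hh.
have e1 : 2 * m - 3 = (2 * m - 4).+1 by lia.
have e2 : m - 1 = (m - 2).+1 by lia.
have e3 : 2 * m + h - 2 = (2 * m + h - 3).+1 by lia.
have e4 : 2 * m - 2 + h = (2 * m + h - 3).+1 by lia.
have e5 : m - 2 = (m - 3).+1 by lia.
have e6 : 2 * m - 4 = (m - 2) + (m - 2) by lia.
have e7 : 2 * m + h - 3 = (h - 1) + 2 + (2 * m - 4) by lia.
rewrite e1 e2 e3 e4 /= !expnS; split => //; split => //.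
- by rewrite e5 expnS leq_pmulr ?expn_gt0.
- rewrite e6 expnD leq_mul2r; apply/orP; right; rewrite e5 expnS leq_pmulr ?expn_gt0 //.
- by rewrite e7 !expnD leq_mul2r leq_pmull ?expn_gt0 ?orbT.
Qed.

Ltac ar ha hb hW2 hK hKm1 hab hWa hb2 m h :=
  rewrite ?ha ?hb ?hW2 ?hK ?hKm1; move: hab hWa hb2;
  generalize (2 ^ (2 * m - 4)) (2 ^ (m - 2)) (2 ^ (2 * m + h - 3));
  intros; repeat match goal with H : context [2 ^ _] |- _ => clear H end; lia.
 Ltac mh := repeat match goal with H : context [2 ^ _] |- _ => clear H end; lia.

Theorem proposition4p6 (m h : nat) (hm : 3 <= m) (hh : 1 <= h)
  (G0 : 'M['F_2]_(2 * m - 2, 2 ^ (2 * m - 3) + 2 ^ (m - 2) - 1))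
  (rkG0 : \rank G0 = 2 * m - 2)
  (projG0 : projective G0)
  (wtsG0 : forall w, has_nz_weight G0 w <->
             (w = 2 ^ (2 * m - 4) \/ w = 2 ^ (2 * m - 4) + 2 ^ (m - 2))) :
  let G1 := simplex_comp h G0 in
  let N := #|simplex_cols h G0| in
  let n' := 2 ^ (2 * m + h - 3) - 2 ^ (2 * m - 3) - 2 ^ (m - 1) in
  [/\ N = 2 ^ (2 * m + h - 2) - 2 ^ (2 * m - 3) - 2 ^ (m - 2),
      \rank G1 = 2 * m + h - 2,
      wmin G1 = 2 ^ (2 * m + h - 3) - 2 ^ (2 * m - 4) - 2 ^ (m - 2),
      wmax G1 = 2 ^ (2 * m + h - 3) &
      forall R : 'M['F_2]_(2 * m - 2 + h, N), ext_basis G1 R ->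
        let E := ext_mx (ext_len G1) R in
        [/\ ext_len G1 = n',
            ext_len G1 + N = 2 ^ (2 * m + h - 2) - 2 ^ (2 * m - 3) - 2 ^ (m - 2) + n',
            \rank E = 2 * m + h - 2 &
          [/\ minimal_code E,
            wmin E = 2 ^ (2 * m + h - 3) - 2 ^ (2 * m - 4) - 2 ^ (m - 2),
            wmax E = 2 ^ (2 * m + h - 2) - 2 ^ (2 * m - 3) - 2 ^ (m - 1) &
            ~ AB_condition E]]].
Proof.
move=> G1 N n'.
have [ha hb hW2 hK [hKm1 hb2 hab hWa]] := arith hm hh.
have rfG0 : row_free G0 by rewrite /row_free rkG0.
have wG1 : forall u : 'rV['F_2]_(2 * m - 2 + h), u != 0%R ->
  [\/ wt (u *m G1)%R = 2 ^ (2 * m + h - 3),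
      wt (u *m G1)%R = 2 ^ (2 * m + h - 3) - 2 ^ (2 * m - 4) |
      wt (u *m G1)%R = 2 ^ (2 * m + h - 3) - (2 ^ (2 * m - 4) + 2 ^ (m - 2))].
  move=> u u0; rewrite /G1 (simplex_wt projG0 u0) hKm1.
  case: (eqVneq (lsubmx u) 0%R) => [-> | l0].
    by rewrite mul0mx wt0 subn0; constructor 1.
  have : has_nz_weight G0 (wt (lsubmx u *m G0)%R).
    exists (lsubmx u *m G0)%R => //; rewrite !inE code_f andbT.
    by rewrite mulmx_free_eq0.
  by case/wtsG0 => ->; [constructor 2 | constructor 3].
have codeG1 : forall c, c \in code G1 -> exists u, c = (u *m G1)%R.
  by move=> c /code_mem.
have wmax1 : wmax G1 = 2 ^ (2 * m + h - 3).
  apply: wmax_eq.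
    move=> c /codeG1 [u ->]; case: (eqVneq u 0%R) => [-> | u0].
      by rewrite mul0mx wt0.
    by case: (wG1 u u0) => ->; rewrite ?leq_subr.
  pose y : 'rV['F_2]_h := const_mx 1%R.
  have y0 : y != 0%R.
    apply/eqP => /matrixP /(_ 0%R (Ordinal hh)); rewrite !mxE => /eqP.
    by rewrite oner_eq0.
  have u0 : row_mx 0%R y != 0%R :> 'rV['F_2]_(2 * m - 2 + h).
    by rewrite row_mx_eq0 negb_and y0 orbT.
  exists (row_mx 0 y *m G1)%R; first exact: code_f.
  by rewrite /G1 (simplex_wt projG0 u0) hKm1 row_mxKl mul0mx wt0 subn0.
have wmin1 : wmin G1 = 2 ^ (2 * m + h - 3) - 2 ^ (2 * m - 4) - 2 ^ (m - 2).
  apply: wmin_eq.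
    move=> c; rewrite !inE => /andP [c0 /codeG1 [u Eu]].
    have u0 : u != 0%R by apply: contra c0 => /eqP u0; rewrite Eu u0 mul0mx.
    rewrite Eu; case: (wG1 u u0) => ->; ar ha hb hW2 hK hKm1 hab hWa hb2 m h.
  have [c Hc Hw] : has_nz_weight G0 (2 ^ (2 * m - 4) + 2 ^ (m - 2)) by apply/wtsG0; right.
  move: Hc; rewrite !inE => /andP [c0 /code_mem [x Ex]].
  have x0 : x != 0%R by apply: contra c0 => /eqP x0; rewrite Ex x0 mul0mx.
  have u0 : row_mx x 0%R != 0%R :> 'rV['F_2]_(2 * m - 2 + h).
    by rewrite row_mx_eq0 negb_and x0.
  exists (row_mx x 0 *m G1)%R.
    rewrite !inE code_f andbT; apply/eqP => H.
    have := simplex_wt projG0 u0; rewrite -/G1 H wt0 row_mxKl -Ex Hw hKm1; ar ha hb hW2 hK hKm1 hab hWa hb2 m h.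
  by rewrite /G1 (simplex_wt projG0 u0) hKm1 row_mxKl -Ex Hw; ar ha hb hW2 hK hKm1 hab hWa hb2 m h.
have hn : wmax G1 < 2 * wmin G1 by rewrite wmax1 wmin1; ar ha hb hW2 hK hKm1 hab hWa hb2 m h.
have hK1 : 1 < 2 * m - 2 + h by mh.
split.
- by rewrite /N simplex_card //; ar ha hb hW2 hK hKm1 hab hWa hb2 m h.
- have rf1 : row_free G1.
    apply: inj_row_free => u Hu; apply/eqP; apply/negPn/negP => u0.
    by have := wG1 u u0; rewrite Hu wt0; case=> H; move: H; ar ha hb hW2 hK hKm1 hab hWa hb2 m h.
  by rewrite (eqP rf1); mh.
- exact: wmin1.
- exact: wmax1.
move=> R hR E.
have el : ext_len G1 = n' by rewrite /ext_len /n' wmin1 wmax1; ar ha hb hW2 hK hKm1 hab hWa hb2 m h.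
split.
- exact: el.
- by rewrite el /N simplex_card //; ar ha hb hW2 hK hKm1 hab hWa hb2 m h.
- by rewrite /E E_rank //; mh.
split.
- exact: E_minimal.
- by rewrite /E E_wmin.
- by rewrite /E E_wmax // wmin1; ar ha hb hW2 hK hKm1 hab hWa hb2 m h.
rewrite /AB_condition /E E_wmax // E_wmin // natrM.
have nz : ((wmin G1)%:R != 0 :> rat)%R by rewrite pnatr_eq0 wmin1; apply/eqP; ar ha hb hW2 hK hKm1 hab hWa hb2 m h.
have -> : ((wmin G1)%:R / (2%:R * (wmin G1)%:R) = 1 / 2 :> rat)%R by field.
by rewrite ltxx.
Qed.
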